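(* Assume the standing hypotheses below, with $\mathcal{B}$ as defined there. Then for every $A \in \mathcal{B}$, every pure subgroup of finite rank of the quotient group $G/A$ is free.
   Context: Standing hypotheses: $G$ is a torsion-free abelian group and $0 = G_0 < G_1 < \dots < G_n < \dots$ ($n<\omega$) is an ascending chain of subgroups of $G$ such that every $G_n$ is free, every $G_n$ is a pure subgroup of $G$, and $G = \bigcup_{n<\omega} G_n$. For each $n<\omega$, $X_n$ is a fixed basis of $G_n$, $\mathcal{B}_n$ is the family of all subgroups of $G_n$ generated by subsets of $X_n$, $\mathcal{B}'_n = \{ A \in \mathcal{B}_n : A + G_i \text{ is pure in } G \text{ for every } i<\omega\}$, and $\mathcal{B} = \{ A \le G : A \cap G_n \in \mathcal{B}'_n \text{ for every } n<\omega\}$. A subgroup $H$ of an abelian group $G$ is pure if solubility in $G$ of every equation $nx = h$ with $n\in\mathbb{Z}$, $h\in H$ implies its solubility in $H$. The rank of an abelian group is the cardinality of a maximal independent subset. *)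

(* Defs.v *)
(* Abelian groups are zmodTypes; subgroups are Prop-valued
   predicates (membership need not be decidable). *)
From HB Require Import structures.
From mathcomp Require Import all_boot all_order all_algebra.
Set Implicit Arguments. Unset Strict Implicit. Unset Printing Implicit Defensive.
Import Order.TTheory GRing.Theory Num.Theory.
Local Open Scope ring_scope.

Section AbGroups.
Variable G : zmodType.

Definition set_eq (P Q : G -> Prop) : Prop := forall x, P x <-> Q x.
Definition sub_set (P Q : G -> Prop) : Prop := forall x, P x -> Q x.

Definition torsion_free : Prop :=
  forall (n : nat) (x : G), (0 < n)%N -> x *+ n = 0 -> x = 0.

Definition is_subgroup (H : G -> Prop) : Prop :=
  H 0 /\ forall x y, H x -> H y -> H (x - y).

Definition span (X : G -> Prop) (g : G) : Prop :=
  exists (s : seq G) (c : G -> int),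
    {in s, forall x, X x} /\ g = \sum_(x <- s) x *~ c x.

Definition independent (X : G -> Prop) : Prop :=
  forall (s : seq G) (c : G -> int),
    uniq s -> {in s, forall x, X x} ->
    \sum_(x <- s) x *~ c x = 0 -> {in s, forall x, c x = 0%R}.

Definition is_basis (H X : G -> Prop) : Prop :=
  sub_set X H /\ independent X /\ set_eq H (span X).

Definition is_free (H : G -> Prop) : Prop := exists X, is_basis H X.

Definition is_pure (H : G -> Prop) : Prop :=
  forall (n : int) (h : G), H h -> (exists x : G, x *~ n = h) ->
    exists y : G, H y /\ y *~ n = h.

Definition finite_rank (H : G -> Prop) : Prop :=
  exists s : seq G,
    {in s, forall x, H x} /\ independent (fun x => x \in s) /\
    forall Y : G -> Prop, sub_set Y H -> independent Y ->
      (forall x, x \in s -> Y x) -> forall y, Y y -> y \in s.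

Definition sum_sub (A B : G -> Prop) (g : G) : Prop :=
  exists a b, A a /\ B b /\ g = a + b.

Definition cap (A B : G -> Prop) (g : G) : Prop := A g /\ B g.

Definition in_Bn (Xn A : G -> Prop) : Prop :=
  exists Y, sub_set Y Xn /\ set_eq A (span Y).

Definition in_Bn' (Gs : nat -> G -> Prop) (Xn A : G -> Prop) : Prop :=
  in_Bn Xn A /\ forall i : nat, is_pure (sum_sub A (Gs i)).

Definition in_B (Gs Xs : nat -> G -> Prop) (A : G -> Prop) : Prop :=
  is_subgroup A /\ forall n : nat, in_Bn' Gs (Xs n) (cap A (Gs n)).

End AbGroups.

(* Main.v *)
Require Import Defs.
From HB Require Import structures.
From mathcomp Require Import all_boot all_order all_algebra.
Import Order.TTheory GRing.Theory Num.Theory.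
Local Open Scope ring_scope.
From mathcomp Require Import intdiv.
From Stdlib Require Import Classical ClassicalEpsilon.

Set Implicit Arguments. Unset Strict Implicit.

Definition decb (P : Prop) : bool :=
  if excluded_middle_informative P then true else false.
Lemma decbP (P : Prop) : reflect P (decb P).
Proof. rewrite /decb; case: excluded_middle_informative => h; constructor => //. Qed.

Section Gen.
Variable V : zmodType.
Implicit Types X Y Z H : V -> Prop.

Lemma sum_mulz (I : Type) (s : seq I) (F : I -> V) (k : int) :
  (\sum_(i <- s) F i) *~ k = \sum_(i <- s) F i *~ k.
Proof. by elim: s => [|a s IH]; rewrite ?big_nil ?big_cons ?mul0rz // mulrzDl IH. Qed.

Lemma sum_restrict (T : eqType) (s w : seq T) (F : T -> V) :
  uniq s -> uniq w -> {subset s <= w} ->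
  \sum_(x <- w) (if x \in s then F x else 0) = \sum_(x <- s) F x.
Proof.
move=> us uw sw; rewrite -big_mkcond -big_filter; apply: perm_big.
apply: uniq_perm; first exact: filter_uniq.
  done.
by move=> x; rewrite mem_filter; case xs: (x \in s); rewrite //= sw.
Qed.

Lemma sum_merge (s u : seq V) (a b : V -> int) :
  uniq s -> uniq u ->
  \sum_(x <- undup (s ++ u)) x *~ ((if x \in s then a x else 0) + (if x \in u then b x else 0))
  = \sum_(x <- s) x *~ a x + \sum_(x <- u) x *~ b x.
Proof.
move=> us uu.
rewrite (eq_bigr (fun x => (if x \in s then x *~ a x else 0) + (if x \in u then x *~ b x else 0))); last first.
  by move=> x _; rewrite mulrzDr; case: (x \in s); case: (x \in u); rewrite ?mulr0z.
rewrite big_split /= !sum_restrict ?undup_uniq // => x xs; rewrite mem_undup mem_cat xs ?orbT //.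
Qed.

Lemma span_in X x : X x -> Defs.span X x.
Proof.
move=> Xx; exists [:: x], (fun _ => 1); split.
  by move=> y; rewrite inE => /eqP ->.
by rewrite big_cons big_nil mulr1z addr0.
Qed.

Lemma span0 X : Defs.span X 0.
Proof. by exists [::], (fun _ => 0); split => //; rewrite big_nil. Qed.

Lemma span_mono X Y g : sub_set X Y -> Defs.span X g -> Defs.span Y g.
Proof. by move=> XY [s [c [sX ->]]]; exists s, c; split => // x /sX /XY. Qed.

Lemma span_uniq X g : Defs.span X g ->
  exists s c, uniq s /\ {in s, forall x, X x} /\ g = \sum_(x <- s) x *~ c x.
Proof.
move=> [s [c [sX ->]]]; elim: s sX => [|a s IH] sX.
  by exists [::], c; rewrite big_nil.
have sX' : {in s, forall x, X x} by move=> x xs; apply: sX; rewrite inE xs orbT.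
have Xa : X a by apply: sX; rewrite inE eqxx.
have [s' [c' [us' [sX'' eq']]]] := IH sX'.
case: (boolP (a \in s')) => as'.
  exists s', (fun y => if y == a then c' a + c a else c' y); split => //; split => //.
  rewrite big_cons eq' !(bigD1_seq a) //= eqxx mulrzDr addrA [a *~ c a + _]addrC.
  congr (_ + _); apply: eq_bigr => x /negbTE -> //.
exists (a :: s'), (fun y => if y == a then c a else c' y); split; first by rewrite /= as'.
split; first by move=> x; rewrite inE => /orP [/eqP -> //|]; exact: sX''.
rewrite !big_cons eqxx eq'; congr (_ + _); apply: eq_big_seq => x xs.
by have /negbTE -> : x != a by apply: contraNneq as' => <-.
Qed.

Lemma span_add X g h : Defs.span X g -> Defs.span X h -> Defs.span X (g + h).
Proof.
move=> /span_uniq [s [a [us [sX ->]]]] /span_uniq [u [b [uu [uX ->]]]].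
exists (undup (s ++ u)), (fun x => (if x \in s then a x else 0) + (if x \in u then b x else 0)).
split; last by rewrite sum_merge.
by move=> x; rewrite mem_undup mem_cat => /orP [/sX|/uX].
Qed.

Lemma span_opp X g : Defs.span X g -> Defs.span X (- g).
Proof.
move=> [s [c [sX ->]]]; exists s, (fun x => - c x); split => //.
by rewrite -sumrN; apply: eq_bigr => x _; rewrite mulrNz.
Qed.

Lemma span_sub X g h : Defs.span X g -> Defs.span X h -> Defs.span X (g - h).
Proof. by move=> sg sh; apply: span_add => //; apply: span_opp. Qed.

Lemma span_mulz X g k : Defs.span X g -> Defs.span X (g *~ k).
Proof.
move=> [s [c [sX ->]]]; exists s, (fun x => c x * k); split => //.
by rewrite sum_mulz; apply: eq_bigr => x _; rewrite mulrzA.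
Qed.

Lemma span_sum X (I : eqType) (r : seq I) (F : I -> V) :
  (forall i, i \in r -> Defs.span X (F i)) -> Defs.span X (\sum_(i <- r) F i).
Proof.
elim: r => [|a r IH] h; first by rewrite big_nil; apply: span0.
rewrite big_cons; apply: span_add; first by apply: h; rewrite inE eqxx.
by apply: IH => i ir; apply: h; rewrite inE ir orbT.
Qed.

Lemma sub0 H : is_subgroup H -> H 0.
Proof. by case. Qed.
Lemma subN H x : is_subgroup H -> H x -> H (- x).
Proof. by move=> [h0 hB] hx; rewrite -sub0r; apply: hB. Qed.
Lemma subD H x y : is_subgroup H -> H x -> H y -> H (x + y).
Proof. by move=> sH hx hy; rewrite -[y]opprK; apply: sH.2 => //; apply: subN. Qed.
Lemma subB H x y : is_subgroup H -> H x -> H y -> H (x - y).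
Proof. by move=> sH; apply: sH.2. Qed.
Lemma subMn H x n : is_subgroup H -> H x -> H (x *+ n).
Proof.
move=> sH hx; elim: n => [|n IH]; first by rewrite mulr0n; apply: sub0.
by rewrite mulrS; apply: subD.
Qed.
Lemma subMz H x k : is_subgroup H -> H x -> H (x *~ k).
Proof.
move=> sH hx; case: k => n.
  by rewrite -pmulrn; apply: subMn.
by rewrite NegzE mulrNz; apply: subN => //; rewrite -pmulrn; apply: subMn.
Qed.

Lemma span_subgroup X H g : is_subgroup H -> sub_set X H -> Defs.span X g -> H g.
Proof.
move=> sH XH [s [c [sX ->]]]; elim: s sX => [|a s IH] sX.
  by rewrite big_nil; apply: sub0.
rewrite big_cons; apply: subD => //.
  by apply: subMz => //; apply: XH; apply: sX; rewrite inE eqxx.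
by apply: IH => x xs; apply: sX; rewrite inE xs orbT.
Qed.

Lemma span_is_subgroup X : is_subgroup (Defs.span X).
Proof. by split; [apply: span0| move=> x y; apply: span_sub]. Qed.

Lemma indep_coef X Z s u a b :
  independent X -> sub_set Z X ->
  uniq s -> {in s, forall x, X x} -> uniq u -> {in u, forall x, Z x} ->
  \sum_(x <- s) x *~ a x = \sum_(x <- u) x *~ b x ->
  forall x, x \in s -> ~ Z x -> a x = 0.
Proof.
move=> iX ZX us sX uu uZ eq x xs nZx.
have := iX (undup (s ++ u)) (fun x => (if x \in s then a x else 0) + (if x \in u then - b x else 0)).
rewrite undup_uniq sum_merge //.
have -> : \sum_(x <- u) x *~ - b x = - \sum_(x <- u) x *~ b x.
  by rewrite -sumrN; apply: eq_bigr => y _; rewrite mulrNz.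
rewrite eq subrr => /(_ isT).
have H1 : {in undup (s ++ u), forall x, X x}.
  by move=> y; rewrite mem_undup mem_cat => /orP [/sX //|/uZ /ZX].
move=> /(_ H1 erefl x); rewrite mem_undup mem_cat xs /= => /(_ isT).
have -> : (x \in u) = false by apply/negP => /uZ.
by rewrite addr0.
Qed.

Lemma basis_pure X Z g k : independent X -> sub_set Z X -> Defs.span X g -> k != 0 ->
  Defs.span Z (g *~ k) -> Defs.span Z g.
Proof.
move=> iX ZX /span_uniq [s [cs [us [sX gE]]]] k0 /span_uniq [u [cu [uu [uZ gkE]]]].
have hc := @indep_coef X Z s u (fun x => cs x * k) cu iX ZX us sX uu uZ.
have hz : forall x, x \in s -> ~ Z x -> cs x = 0.
  move=> x xs nZ.
  have : cs x * k = 0.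
    apply: (hc _ x xs nZ); rewrite -gkE gE sum_mulz; apply: eq_bigr => y _; by rewrite mulrzA.
  by move/eqP; rewrite mulf_eq0 (negbTE k0) orbF => /eqP.
exists [seq x <- s | decb (Z x)], cs; split.
  by move=> x; rewrite mem_filter => /andP [/decbP].
rewrite big_filter big_mkcond gE; apply: eq_big_seq => x xs /=.
case: decbP => // nZ; by rewrite (hz x xs nZ) mulr0z.
Qed.

Lemma subsub (a b c d : V) : (a - b) - (c - d) = (a - c) - (b - d).
Proof. by rewrite !opprB addrACA [RHS]addrACA [- b + _]addrC. Qed.

End Gen.

Section Lst.
Variable V : zmodType.
Implicit Types H : V -> Prop.
Definition spanl (e : seq V) (g : V) :=
  exists c : nat -> int, g = \sum_(i < size e) e`_i *~ c i.
Definition indepl (e : seq V) := forall c : nat -> int,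
  \sum_(i < size e) e`_i *~ c i = 0 -> forall i, (i < size e)%N -> c i = 0.

Lemma spanl_sub e g h : spanl e g -> spanl e h -> spanl e (g - h).
Proof.
move=> [c ->] [d ->]; exists (fun i => c i - d i); rewrite -sumrB.
by apply: eq_bigr => i _; rewrite mulrzBr.
Qed.

Lemma spanl0 e : spanl e 0.
Proof. by exists (fun _ => 0); rewrite big1 // => i _; rewrite mulr0z. Qed.

Lemma spanl_subgroup e : is_subgroup (spanl e).
Proof. by split; [apply: spanl0|move=> x y; apply: spanl_sub]. Qed.

Lemma spanl_cons x e g : spanl (x :: e) g <-> exists k g', spanl e g' /\ g = x *~ k + g'.
Proof.
split.
  move=> [c ->]; exists (c 0%N), (\sum_(i < size e) e`_i *~ c i.+1); split.
    by exists (fun i => c i.+1).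
  by rewrite /= big_ord_recl /=.
move=> [k [g' [[c ->] ->]]]; exists (fun i => if i is j.+1 then c j else k).
by rewrite /= big_ord_recl /=.
Qed.

Lemma indepl_cons1 x e : indepl (x :: e) -> indepl e.
Proof.
move=> ie c sc i ie'.
have := ie (fun i => if i is j.+1 then c j else 0).
rewrite /= big_ord_recl /= mulr0z add0r => /(_ sc i.+1); apply.
by [].
Qed.

Lemma indepl_cons2 x e m : indepl (x :: e) -> spanl e (x *~ m) -> m = 0.
Proof.
move=> ie [c cE].
have := ie (fun i => if i is j.+1 then - c j else m).
rewrite /= big_ord_recl /=.
have -> : \sum_(i < size e) e`_i *~ - c i = - (x *~ m).
  by rewrite cE -sumrN; apply: eq_bigr => i _; rewrite mulrNz.
by rewrite subrr => /(_ erefl 0%N); apply.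
Qed.

End Lst.

Lemma free_spanl (V : zmodType) (e : seq V) : indepl e ->
  forall H : V -> Prop, is_subgroup H -> sub_set H (spanl e) -> is_free H.
Proof.
elim: e => [|x e IH] ie H sH Hs.
  exists (fun _ => False); split; first by move=> ?.
  split; first by move=> s c _ sX _ y /sX.
  move=> g; split.
    by move=> /Hs [c ->]; rewrite big_ord0; apply: span0.
  move=> [s [c [sX ->]]]; case: s sX => [|a s] sX.
    by rewrite big_nil; apply: sub0.
  by exfalso; apply: (sX a); rewrite inE eqxx.
have ie' := indepl_cons1 ie.
pose D k := exists h, H h /\ spanl e (h - x *~ k).
case: (classic (exists k, D k /\ k != 0)) => [[k [Dk k0]] | nD]; last first.
  apply: (IH ie' H sH) => h Hh.
  have [k [g' [sg' hE]]] := (spanl_cons x e h).1 (Hs h Hh).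
  have Dk : D k by exists h; split => //; rewrite hE [x *~ k + _]addrC addrK.
  case: (eqVneq k 0) => [k0|k0]; last by exfalso; apply: nD; exists k.
  by rewrite hE k0 mulr0z add0r.
have Dsub : forall a b, D a -> D b -> D (a - b).
  move=> a b [h1 [H1 s1]] [h2 [H2 s2]]; exists (h1 - h2); split; first exact: subB.
  have -> : h1 - h2 - x *~ (a - b) = (h1 - x *~ a) - (h2 - x *~ b).
    by rewrite mulrzBr subsub.
  exact: spanl_sub.
have Dmul : forall a q, D a -> D (a * q).
  move=> a q [h1 [H1 s1]]; exists (h1 *~ q); split; first exact: subMz.
  have -> : h1 *~ q - x *~ (a * q) = (h1 - x *~ a) *~ q by rewrite mulrzBl mulrzA.
  by apply: subMz => //; apply: spanl_subgroup.
have Dpos : exists n : nat, D n%:Z /\ (0 < n)%N.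
  case: (ltrgtP k 0) => kc.
  - exists `|k|%N; split; last by rewrite absz_gt0.
    have D0 : D 0 by have := Dmul k 0 Dk; rewrite mulr0.
    by rewrite ltz0_abs //; have := Dsub 0 k D0 Dk; rewrite sub0r.
  - by exists `|k|%N; split; [rewrite gtz0_abs|rewrite absz_gt0].
  - by move: k0; rewrite kc eqxx.
have Dpos' : exists n, decb (D n%:Z /\ (0 < n)%N).
  by case: Dpos => n hn; exists n; apply/(decbP _).
case: (ex_minnP Dpos') => d /(decbP _) [Dd d0] dmin.
case: Dd => h0 [Hh0 sh0].
pose H' g := H g /\ spanl e g.
have sH' : is_subgroup H'.
  split; first by split; [apply: sub0|apply: spanl0].
  by move=> a b [Ha sa] [Hb sb]; split; [apply: subB|apply: spanl_sub].
have [X' [X'H [iX' eX']]] := IH ie' H' sH' (fun g => @proj2 _ _).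
have Ddiv : forall c, D c -> c = (c %/ d)%Z * d.
  move=> c Dc.
  have Dr : D (c %% d)%Z.
    have := Dsub c (d%:Z * (c %/ d)%Z) Dc (Dmul _ _ (ex_intro _ h0 (conj Hh0 sh0))).
    have -> : (c %% d)%Z = c - d%:Z * (c %/ d)%Z.
      by apply/eqP; rewrite eq_sym subr_eq addrC mulrC -divz_eq.
    done.
  have r0 : (0 <= (c %% d)%Z) by apply: modz_ge0; rewrite eqz_nat -lt0n.
  have rd : ((c %% d)%Z < d%:Z) by apply: ltz_pmod; rewrite ltz_nat.
  case: (eqVneq (c %% d)%Z 0) => [r00|rn0].
    by rewrite {1}(divz_eq c d) r00 addr0.
  exfalso.
  have rp : (0 < `|(c %% d)%Z|)%N by rewrite absz_gt0.
  have := dmin `|(c %% d)%Z|%N.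
  rewrite (gez0_abs r0) => /(_ (introT (decbP _) (conj Dr rp))).
  move=> dl; move: rd; rewrite -(gez0_abs r0) ltz_nat.
  by rewrite ltnNge dl.
exists (fun g => X' g \/ g = h0); split.
  by move=> g [/X'H [] //| ->].
split; last first.
  move=> g; split; last first.
    apply: span_subgroup => //; move=> y [/X'H [] // | ->] //.
  move=> Hg.
  have [c0 [g' [sg' gE]]] := (spanl_cons x e g).1 (Hs g Hg).
  have Dc0 : D c0 by exists g; split => //; rewrite gE [x *~ c0 + _]addrC addrK.
  set q := (c0 %/ d)%Z.
  have cq := Ddiv c0 Dc0.
  have H'g : H' (g - h0 *~ q).
    split; first by apply: subB => //; apply: subMz.
    have -> : g - h0 *~ q = (g - x *~ d *~ q) - (h0 - x *~ d) *~ q.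
      by rewrite mulrzBl opprB addrA subrK.
    apply: spanl_sub; last by apply: subMz => //; apply: spanl_subgroup.
    by rewrite mulrzA_C -cq gE [x *~ c0 + _]addrC addrK.
  have -> : g = (g - h0 *~ q) + h0 *~ q by rewrite subrK.
  apply: span_add; last by apply: span_mulz; apply: span_in; right.
  by apply: (span_mono (X := X')) => [y|]; [left|apply/eX'].
move=> s c us sX sc0.
have hX' : forall y, y \in s -> y != h0 -> X' y.
  by move=> y ys yh; case: (sX y ys) => // yE; move: yh; rewrite yE eqxx.
case: (boolP (h0 \in s)) => hs; last first.
  apply: iX' => // y ys; apply: hX' => //; apply: contraNneq hs => <-.
  done.
move: sc0; rewrite (bigD1_seq h0) //= => sc0.
have sr : Defs.span X' (\sum_(i <- s | i != h0) i *~ c i).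
  rewrite big_seq_cond -big_filter; exists [seq i <- s | (i \in s) && (i != h0)], c; split => //.
  by move=> y; rewrite mem_filter => /andP [/andP [ys yh] _]; apply: hX'.
have sl : spanl e (\sum_(i <- s | i != h0) i *~ c i).
  by have /eX' [] := sr.
have ch0 : c h0 = 0.
  have ex : spanl e (x *~ (d%:Z * c h0)).
    have -> : x *~ (d%:Z * c h0) = - (\sum_(i <- s | i != h0) i *~ c i) - (h0 - x *~ d) *~ c h0.
      have -> : - (\sum_(i <- s | i != h0) i *~ c i) = h0 *~ c h0.
        by apply/eqP; rewrite eq_sym -subr_eq0 opprK sc0.
      by rewrite mulrzBl opprB addrC subrK mulrzA.
    apply: spanl_sub; first by apply: (subN (spanl_subgroup e)).
    by apply: subMz => //; apply: spanl_subgroup.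
  have := indepl_cons2 ie ex; move/eqP; rewrite mulf_eq0 => /orP [|/eqP //].
  by move/eqP => [dz]; move: d0; rewrite dz.
move: sc0; rewrite ch0 mulr0z add0r => sc0.
have ir := iX' [seq i <- s | i != h0] c (filter_uniq _ us).
have := ir _ _; rewrite big_filter => /(_ _ sc0).
move=> ir'; move=> y ys.
case: (eqVneq y h0) => [-> //|yh].
apply: ir' => [z|]; last by rewrite mem_filter yh.
by rewrite mem_filter => /andP [zh zs]; apply: hX'.
Qed.

Unset Implicit Arguments. Set Strict Implicit.

Section PiLemmas.
Variables (G Q : zmodType) (pi : G -> Q).
Hypothesis pi_add : forall x y, pi (x + y) = pi x + pi y.
Lemma pi0 : pi 0 = 0.
Proof. by apply: (@addrI _ (pi 0)); rewrite -pi_add !addr0. Qed.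
Lemma piN x : pi (- x) = - pi x.
Proof. by apply: (@addrI _ (pi x)); rewrite -pi_add !subrr pi0. Qed.
Lemma piB x y : pi (x - y) = pi x - pi y.
Proof. by rewrite pi_add piN. Qed.
Lemma pi_mulz x k : pi (x *~ k) = pi x *~ k.
Proof.
have hn : forall n : nat, pi (x *+ n) = pi x *+ n.
  by elim=> [|n IH]; rewrite ?mulr0n ?pi0 // !mulrS pi_add IH.
case: k => n; first by rewrite -!pmulrn hn.
by rewrite NegzE !mulrNz piN -!pmulrn hn.
Qed.
Lemma pi_sum (I : Type) (r : seq I) (F : I -> G) :
  pi (\sum_(i <- r) F i) = \sum_(i <- r) pi (F i).
Proof. by elim: r => [|a r IH]; rewrite ?big_nil ?pi0 // !big_cons pi_add IH. Qed.
End PiLemmas.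

Lemma tfz (G : zmodType) : torsion_free G -> forall (z : G) k, k != 0 -> z *~ k = 0 -> z = 0.
Proof.
move=> htf z [n|n] k0 h.
  apply: (htf n); first by rewrite lt0n; move: k0; apply: contraNneq => ->.
  by rewrite pmulrn.
apply: (htf n.+1) => //; apply/eqP; by rewrite -oppr_eq0 pmulrn -mulrNz -NegzE h.
Qed.

Lemma sum_index (V : zmodType) (t : seq V) (c : nat -> int) : uniq t ->
  \sum_(i < size t) t`_i *~ c i = \sum_(y <- t) y *~ c (index y t).
Proof.
move=> ut; rewrite (big_nth 0) big_mkord; apply: eq_bigr => i _.
by rewrite index_uniq.
Qed.

Theorem lemma4 (G : zmodType) (Gs Xs : nat -> G -> Prop)
  (htf : torsion_free G)
  (hG0 : forall x, Gs 0%N x <-> x = 0)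
  (hsub : forall n, is_subgroup (Gs n))
  (hchain : forall n, sub_set (Gs n) (Gs n.+1) /\ exists x, Gs n.+1 x /\ ~ Gs n x)
  (hfree : forall n, is_free (Gs n))
  (hpure : forall n, is_pure (Gs n))
  (hunion : forall x : G, exists n, Gs n x)
  (hbasis : forall n, is_basis (Gs n) (Xs n))
  (A : G -> Prop) (hA : in_B Gs Xs A)
  (Q : zmodType) (pi : G -> Q)
  (pi_add : forall x y, pi (x + y) = pi x + pi y)
  (pi_surj : forall q : Q, exists x, pi x = q)
  (pi_ker : forall x, pi x = 0 <-> A x) :
  forall H : Q -> Prop,
    is_subgroup H -> is_pure H -> finite_rank H -> is_free H.
Proof.
move=> H sH pH [s [sHs [iS smax]]].
have Gs_mono : forall m n, (m <= n)%N -> sub_set (Gs m) (Gs n).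
  move=> m n /subnK <-; elim: (n - m)%N => [|k IH] x hx //.
  by rewrite addSn; apply: (hchain _).1; apply: IH.
have rel : forall h, H h -> exists k : int, k != 0 /\ exists r (c : Q -> int),
    {in r, forall x, x \in s} /\ h *~ k = \sum_(x <- r) x *~ c x.
  move=> h Hh; case: (boolP (h \in s)) => hs.
    exists 1; split => //; exists [:: h], (fun _ => 1); split.
      by move=> y; rewrite inE => /eqP ->.
    by rewrite big_cons big_nil mulr1z addr0.
  case: (classic (exists k : int, k != 0 /\ exists r (c : Q -> int),
    {in r, forall x, x \in s} /\ h *~ k = \sum_(x <- r) x *~ c x)) => // nrel.
  exfalso; move/negP: hs; apply.
  apply: (smax (fun y => y \in s \/ y = h)); last by right.
  - by move=> y [/sHs //| ->].
  2: by move=> x xs; left.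
  move=> u c uu uY.
  case: (boolP (h \in u)) => hu; last first.
    apply: iS => // y yu; case: (uY y yu) => // yh; move: hu; rewrite -yh yu.
    done.
  rewrite (bigD1_seq h) //= => sc0.
  have sub' : {in [seq x <- u | x != h], forall x, x \in s}.
    move=> y; rewrite mem_filter => /andP [yh yu]; case: (uY y yu) => // yE.
    by move: yh; rewrite yE eqxx.
  case: (eqVneq (c h) 0) => ch0; last first.
    exfalso; apply: nrel; exists (c h); split => //.
    exists [seq x <- u | x != h], (fun x => - c x); split => //.
    rewrite big_filter (eq_bigr (fun i => - (i *~ c i))); last by move=> i _; rewrite mulrNz.
    by rewrite sumrN; apply/eqP; rewrite -addr_eq0 sc0.
  move: sc0; rewrite ch0 mulr0z add0r => sc0.
  have := iS [seq x <- u | x != h] c (filter_uniq _ uu) sub'; rewrite big_filter => /(_ sc0) iz.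
  move=> y yu; case: (eqVneq y h) => [-> //|yh].
  by apply: iz; rewrite mem_filter yh.
have [lift liftE] : exists f : Q -> G, forall q, pi (f q) = q.
  exists (fun q => proj1_sig (constructive_indefinite_description _ (pi_surj q))).
  by move=> q; case: constructive_indefinite_description.
have [lev levE] : exists f : G -> nat, forall x, Gs (f x) x.
  exists (fun x => proj1_sig (constructive_indefinite_description _ (hunion x))).
  by move=> x; case: constructive_indefinite_description.
pose n := (\max_(x <- s) lev (lift x))%N.
have liftG : forall x, x \in s -> Gs n (lift x).
  move=> x xs; apply: (Gs_mono (lev (lift x))) => //.
  exact: (@leq_bigmax_seq _ s xpredT (fun x => lev (lift x)) x xs isT).
have [XnG [iXn eXn]] := hbasis n.
have [Y [YX eY]] := (hA.2 n).1.
have [rep repE] : exists f : Q -> seq G, forall x, x \in s ->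
    {in f x, forall y, Xs n y} /\ Defs.span (fun y => y \in f x) (lift x).
  have ex : forall x, exists t : seq G, x \in s ->
      {in t, forall y, Xs n y} /\ Defs.span (fun y => y \in t) (lift x).
    move=> x; case: (boolP (x \in s)) => xs; last by exists [::].
    have [u [c [uX uE]]] := (eXn (lift x)).1 (liftG x xs).
    by exists u => _; split => //; exists u, c; split.
  exists (fun x => proj1_sig (constructive_indefinite_description _ (ex x))).
  by move=> x; case: constructive_indefinite_description => t ht; apply: ht.
pose t := undup (flatten [seq rep x | x <- s]).
have tX : {in t, forall y, Xs n y}.
  move=> y; rewrite mem_undup => /flatten_mapP [x xs yr]; exact: (repE x xs).1 y yr.
have liftT : forall x, x \in s -> Defs.span (fun y => y \in t) (lift x).
  move=> x xs; apply: (span_mono _ (repE x xs).2) => y yr.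
  by rewrite mem_undup; apply/flatten_mapP; exists x.
pose t' := [seq y <- t | ~~ decb (Y y)].
pose e := [seq pi y | y <- t'].
have ut' : uniq t' by apply: filter_uniq; apply: undup_uniq.
have t'X : {in t', forall y, Xs n y} by move=> y; rewrite mem_filter => /andP [_ /tX].
have t'Y : forall y, y \in t' -> ~ Y y.
  move=> y; rewrite mem_filter => /andP [ny _] Yy; move: ny.
  by rewrite (introT (decbP _) Yy).
have ie : indepl e.
  move=> c; rewrite size_map => sc i il.
  pose v := \sum_(i < size t') t'`_i *~ c i.
  have pv : pi v = 0.
    rewrite /v (pi_sum _ _ _ pi_add) -[RHS]sc; apply: eq_bigr => j _.
    by rewrite (pi_mulz _ _ _ pi_add) (nth_map 0).
  have vE : v = \sum_(y <- t') y *~ c (index y t') by rewrite /v sum_index.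
  have Gv : Gs n v.
    by apply/eXn; exists t', (fun y => c (index y t')); split.
  have [u [b [uu [uY uE]]]] := span_uniq ((eY v).1 (conj ((pi_ker v).1 pv) Gv)).
  have := indep_coef iXn YX ut' t'X uu uY (etrans (esym vE) uE).
  move=> /(_ (nth 0 t' i) (mem_nth 0 il) (t'Y _ (mem_nth 0 il))).
  by rewrite index_uniq.
have Hspan : sub_set H (spanl e).
  move=> h Hh.
  have [k [k0 [r [c [rs hk]]]]] := rel h Hh.
  pose g' := \sum_(x <- r) lift x *~ c x.
  have pg' : pi g' = h *~ k.
    rewrite hk (pi_sum _ _ _ pi_add); apply: eq_bigr => x _.
    by rewrite (pi_mulz _ _ _ pi_add) liftE.
  have g't : Defs.span (fun y => y \in t) g'.
    apply: span_sum => x xr; apply: span_mulz; apply: liftT; exact: rs.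
  have g'n : Gs n g' by apply/eXn; apply: (span_mono _ g't) => y /tX.
  pose g := lift h.
  pose a := g *~ k - g'.
  have Aa : A a.
    by apply/pi_ker; rewrite (piB _ _ _ pi_add) (pi_mulz _ _ _ pi_add) liftE pg' subrr.
  have hsum : sum_sub (cap A (Gs (lev a))) (Gs n) (g *~ k).
    by exists a, g'; split; [split|split] => //; rewrite subrK.
  have [y [[a' [b' [[Aa' Ga'] [Gb' yE]]]] yk]] :=
    (hA.2 (lev a)).2 n k (g *~ k) hsum (ex_intro _ g erefl).
  have yg : y = g.
    by apply/eqP; rewrite -subr_eq0; apply/eqP; apply: (@tfz _ htf _ k k0); rewrite mulrzBl yk subrr.
  have hb : h = pi b'.
    by rewrite -(liftE h) -/g -yg yE pi_add (proj2 (pi_ker a') Aa') add0r.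
  have bk : Defs.span Y (b' *~ k - g').
    apply/eY; split.
      have -> : b' *~ k - g' = a - a' *~ k.
        have -> : b' = g - a' by rewrite -yg yE [a' + b']addrC addrK.
        by rewrite mulrzBl addrAC.
      by apply: (subB hA.1) => //; apply: (subMz _ hA.1).
    by apply: (subB (hsub n)) => //; apply: (subMz _ (hsub n)).
  pose Z := fun y => y \in t \/ Y y.
  have bZk : Defs.span Z (b' *~ k).
    have -> : b' *~ k = (b' *~ k - g') + g' by rewrite subrK.
    apply: span_add; [apply: (span_mono _ bk) => z Yz; by right | apply: (span_mono _ g't) => z zt; by left].
  have ZX : sub_set Z (Xs n) by move=> w [wt|Yw]; [exact: tX | exact: YX].
  have bZ := basis_pure iXn ZX ((eXn b').1 Gb') k0 bZk.
  have [u [cu [uu [uZ bE]]]] := span_uniq bZ.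
  have hE : h = \sum_(y <- u) pi y *~ cu y.
    rewrite hb bE (pi_sum _ _ _ pi_add); apply: eq_bigr => z _.
    by rewrite (pi_mulz _ _ _ pi_add).
  pose fl := [seq z <- u | z \in t'].
  pose cf y := if y \in fl then cu y else 0.
  exists (fun i => cf (nth 0 t' i)).
  rewrite size_map hE.
  have -> : \sum_(i < size t') e`_i *~ cf t'`_i = \sum_(y <- t') pi y *~ cf y.
    by rewrite (big_nth 0) big_mkord; apply: eq_bigr => i _; rewrite (nth_map 0).
  have -> : \sum_(y <- t') pi y *~ cf y = \sum_(y <- t') (if y \in fl then pi y *~ cu y else 0).
    by apply: eq_bigr => z _; rewrite /cf; case: (z \in fl); rewrite ?mulr0z.
  rewrite sum_restrict //; last by move=> z; rewrite mem_filter => /andP [].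
    2: by apply: filter_uniq.
  rewrite big_filter [in RHS]big_mkcond; apply: eq_big_seq => z zu.
  case zt: (z \in t') => //.
  case: (decbP (Y z)) => Yz.
    by rewrite (proj2 (pi_ker z) (proj1 ((eY z).2 (span_in Yz)))) mul0rz.
  exfalso; move: zt; rewrite mem_filter.
  case: (uZ z zu) => // zt; by rewrite zt andbT; case: decbP.
exact: (free_spanl ie sH Hspan).
Qed.
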